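(* Let $M$ be a right $R$-module and $S={\rm End}_R(M)$. (1) The following are equivalent: (i) $M$ is a strongly self-Rickart right $R$-module; (ii) $S$ is a strongly self-Rickart right $S$-module and for every $f\in S$, ${\rm Ker}(f)$ is $M$-cyclic; (iii) $S$ is a strongly self-Rickart right $S$-module and for every $f\in S$, ${\rm Ker}(f)\in {\rm Stat}({\rm Hom}_R(M,-))$; (iv) $S$ is a strongly self-Rickart right $S$-module and for every $f\in S$, the inclusion ${\rm ker}(f):{\rm Ker}(f)\to M$ is a locally split monomorphism; (v) $S$ is a strongly self-Rickart right $S$-module and $M$ is $k$-quasi-retractable. (2) The following are equivalent: (i) $M$ is a dual strongly self-Rickart right $R$-module; (ii) $S$ is a strongly self-Rickart left $S$-module and for every $f\in S$, ${\rm Coker}(f)$ is $M$-cocyclic; (iii) $S$ is a strongly self-Rickart left $S$-module and for every $f\in S$, ${\rm Coker}(f)\in {\rm Refl}({\rm Hom}_R(-,M))$; (iv) $S$ is a strongly self-Rickart left $S$-module and for every $f\in S$, the projection ${\rm coker}(f):M\to {\rm Coker}(f)$ is a locally split epimorphism; (v) $S$ is a strongly self-Rickart left $S$-module and $M$ is $c$-quasi-coretractable.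
   Context: A module $X$ is strongly self-Rickart if for every endomorphism $g$ of $X$, ${\rm Ker}(g)$ is a direct summand of $X$ which is fully invariant ($h({\rm Ker}(g))\subseteq{\rm Ker}(g)$ for all endomorphisms $h$); $X$ is dual strongly self-Rickart if for every endomorphism $g$, ${\rm Im}(g)$ is a fully invariant direct summand of $X$. A module $Y$ is $M$-cyclic if there is an epimorphism $M\to Y$; $Y$ is $M$-cocyclic if there is a monomorphism $Y\to M$. ${\rm Stat}({\rm Hom}_R(M,-))$ is the class of right $R$-modules $X$ for which the counit (evaluation) map ${\rm Hom}_R(M,X)\otimes_S M\to X$ of the adjunction $(-\otimes_S M,{\rm Hom}_R(M,-))$ is an isomorphism. ${\rm Refl}({\rm Hom}_R(-,M))$ is the class of right $R$-modules $X$ for which the natural evaluation map $X\to {\rm Hom}_S({\rm Hom}_R(X,M),M)$ is an isomorphism (for the pair of contravariant functors ${\rm Hom}_R(-,M)$ from right $R$-modules to left $S$-modules and ${\rm Hom}_S(-,M)$ back). A monomorphism $u:A\to B$ of right $R$-modules is locally split if for every $a\in A$ there is an $R$-homomorphism $h:B\to A$ with $h(u(a))=a$; an epimorphism $v:B\to C$ is locally split if for every $c\in C$ there is an $R$-homomorphism $h:C\to B$ with $v(h(c))=c$. $M$ is $k$-quasi-retractable if ${\rm Hom}_R(M,{\rm Ker}(f))\neq 0$ for every $f\in {\rm End}_R(M)$ with ${\rm Ker}(f)\neq 0$; $M$ is $c$-quasi-coretractable if ${\rm Hom}_R({\rm Coker}(f),M)\neq 0$ for every $f\in{\rm End}_R(M)$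 with ${\rm Coker}(f)\neq 0$. *)

(* Defs.v *)
From mathcomp Require Import all_boot all_algebra.
Import GRing.Theory.

Set Implicit Arguments.
Unset Strict Implicit.
Unset Printing Implicit Defensive.

Local Open Scope ring_scope.

(* A lightweight, explicit notion of "module data", used to speak uniformly  *)
(* about the three modules of the statement: M_R, S_S and _S S, where        *)
(* S = End_R(M) is realised as the set of R-endomorphisms of M (a subset of  *)
(* the function type M -> M, equality of endomorphisms being equality of     *)
(* functions).                                                               *)
(*   mcar  : ambient carrier type, mset : the elements of the module,        *)
(*   mscal : ambient type of scalars, msc : the scalars (elements of ring),  *)
Record modData := ModData {
  mcar : Type;
  mset : mcar -> Prop;
  mzero : mcar;
  madd : mcar -> mcar -> mcar;
  mopp : mcar -> mcar;
  mscal : Type;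
  msc : mscal -> Prop;
  mact : mcar -> mscal -> mcar
}.

Section ModuleNotions.
Variable D : modData.

Definition is_endo (g : mcar D -> mcar D) : Prop :=
  [/\ forall x, mset x -> mset (g x),
      forall x y, mset x -> mset y -> g (madd x y) = madd (g x) (g y) &
      forall x r, mset x -> msc r -> g (mact x r) = mact (g x) r].

Definition is_submod (P : mcar D -> Prop) : Prop :=
  [/\ forall x, P x -> mset x,
      P (mzero D),
      forall x y, P x -> P y -> P (madd x y),
      forall x, P x -> P (mopp x) &
      forall x r, P x -> msc r -> P (mact x r)].

Definition Ker (g : mcar D -> mcar D) : mcar D -> Prop :=
  fun x => mset x /\ g x = mzero D.

Definition direct_summand (P : mcar D -> Prop) : Prop :=
  exists Q, [/\ is_submod Q,
     forall x, P x -> Q x -> x = mzero D &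
     forall x, mset x -> exists y z, [/\ P y, Q z & x = madd y z]].

Definition fully_invariant (P : mcar D -> Prop) : Prop :=
  forall h, is_endo h -> forall x, P x -> P (h x).

Definition strongly_self_Rickart : Prop :=
  forall g, is_endo g ->
    direct_summand (Ker g) /\ fully_invariant (Ker g).

Definition Im (g : mcar D -> mcar D) : mcar D -> Prop :=
  fun y => exists x, mset x /\ g x = y.

Definition dual_strongly_self_Rickart : Prop :=
  forall g, is_endo g ->
    direct_summand (Im g) /\ fully_invariant (Im g).

End ModuleNotions.

Section EndoRing.
Variables (R : pzRingType) (M : lmodType R^c).

(* M as a right R-module: m . r := r *: m in the converse ring R^c *)
Definition modM : modData :=
  @ModData M (fun _ => True) 0 +%R (fun x => - x) R (fun _ => True)
           (fun m r => (r : R^c) *: m).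

Definition inS (f : M -> M) : Prop := is_endo (D := modM) f.

Definition zeroS : M -> M := fun _ => 0.
Definition addS (f g : M -> M) : M -> M := fun x => f x + g x.
Definition oppS (f : M -> M) : M -> M := fun x => - f x.

Definition modS_right : modData :=
  @ModData (M -> M) inS zeroS addS oppS (M -> M) inS (fun f t => f \o t).

Definition modS_left : modData :=
  @ModData (M -> M) inS zeroS addS oppS (M -> M) inS (fun f s => s \o f).

(* Ker(f) is M-cyclic: there is an epimorphism M -> Ker(f), i.e. an
   R-endomorphism of M whose image is exactly Ker(f). *)
Definition Ker_M_cyclic (f : M -> M) : Prop :=
  exists p, inS p /\ forall y, f y = 0 <-> exists x, p x = y.

(* Coker(f) = M/Im(f) is M-cocyclic: there is a monomorphism Coker(f) -> M,
   i.e. an R-endomorphism q of M vanishing on Im(f) whose kernel is Im(f). *)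
Definition Coker_M_cocyclic (f : M -> M) : Prop :=
  exists q, [/\ inS q, forall y, q (f y) = 0 &
                 forall x, q x = 0 -> exists y, x = f y].

(* Hom_R(M, Ker f), realised as R-endomorphisms of M with values in Ker f *)
Definition HomM_Ker (f : M -> M) (g : M -> M) : Prop :=
  inS g /\ forall x, f (g x) = 0.

(* Ker(f) in Stat(Hom_R(M,-)): the evaluation map
   Hom_R(M,Ker f) (x)_S M -> Ker f is an isomorphism, i.e. (Ker f, ev) is a
   tensor product of the right S-module Hom_R(M,Ker f) and the left S-module
   M over S (universal property w.r.t. S-balanced biadditive maps). *)
Definition Ker_in_Stat (f : M -> M) : Prop :=
  forall (T : zmodType) (beta : (M -> M) -> M -> T),
    (forall g1 g2 m, HomM_Ker f g1 -> HomM_Ker f g2 ->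
        beta (addS g1 g2) m = beta g1 m + beta g2 m) ->
    (forall g m1 m2, HomM_Ker f g -> beta g (m1 + m2) = beta g m1 + beta g m2) ->
    (forall g s m, HomM_Ker f g -> inS s -> beta (g \o s) m = beta g (s m)) ->
    exists phi : M -> T,
      [/\ forall x y, f x = 0 -> f y = 0 -> phi (x + y) = phi x + phi y,
          forall g m, HomM_Ker f g -> phi (g m) = beta g m &
          forall psi : M -> T,
            (forall x y, f x = 0 -> f y = 0 -> psi (x + y) = psi x + psi y) ->
            (forall g m, HomM_Ker f g -> psi (g m) = beta g m) ->
            forall x, f x = 0 -> psi x = phi x].

(* Hom_R(Coker f, M), realised as R-endomorphisms of M vanishing on Im f *)
Definition HomCoker_M (f : M -> M) (h : M -> M) : Prop :=
  inS h /\ forall y, h (f y) = 0.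

(* Coker(f) in Refl(Hom_R(-,M)): the evaluation map
   Coker f -> Hom_S(Hom_R(Coker f, M), M) is bijective. *)
Definition Coker_in_Refl (f : M -> M) : Prop :=
  (* injectivity *)
  (forall m, (forall h, HomCoker_M f h -> h m = 0) -> exists y, m = f y) /\
  (* surjectivity: every left S-linear phi is evaluation at some class [m] *)
  (forall phi : (M -> M) -> M,
     (forall h1 h2, HomCoker_M f h1 -> HomCoker_M f h2 ->
        phi (addS h1 h2) = phi h1 + phi h2) ->
     (forall s h, inS s -> HomCoker_M f h -> phi (s \o h) = s (phi h)) ->
     exists m, forall h, HomCoker_M f h -> phi h = h m).

Definition ker_locally_split (f : M -> M) : Prop :=
  forall a, f a = 0 -> exists h, HomM_Ker f h /\ h a = a.

Definition coker_locally_split (f : M -> M) : Prop :=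
  forall m, exists h, HomCoker_M f h /\ exists y, h m - m = f y.

Definition k_quasi_retractable : Prop :=
  forall f, inS f -> (exists x, f x = 0 /\ x <> 0) ->
    exists h, HomM_Ker f h /\ exists x, h x <> 0.

Definition c_quasi_coretractable : Prop :=
  forall f, inS f -> (exists x, forall y, f y <> x) ->
    exists h, HomCoker_M f h /\ exists x, h x <> 0.

End EndoRing.

Arguments inS {R} M f.
Arguments Ker_M_cyclic {R} M f.
Arguments Coker_M_cocyclic {R} M f.
Arguments Ker_in_Stat {R} M f.
Arguments Coker_in_Refl {R} M f.
Arguments ker_locally_split {R} M f.
Arguments coker_locally_split {R} M f.
Arguments k_quasi_retractable {R} M.
Arguments c_quasi_coretractable {R} M.
Arguments modM {R} M.
Arguments modS_right {R} M.
Arguments modS_left {R} M.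

(* Main.v *)
Require Import Defs.
From mathcomp Require Import all_boot all_algebra.
From Stdlib Require Import ClassicalEpsilon FunctionalExtensionality Classical.

Set Implicit Arguments.
Unset Strict Implicit.
Unset Printing Implicit Defensive.
Import GRing.Theory.
Local Open Scope ring_scope.

Section Proofs.
Variables (R : pzRingType) (M : lmodType R^c).
Implicit Types (f g h e q s t u : M -> M).

Lemma inS_add f x y : inS M f -> f (x + y) = f x + f y.
Proof. by case=> _ H _; apply: H. Qed.

Lemma inS_scale f (r : R) (x : M) : inS M f -> f ((r : R^c) *: x) = (r : R^c) *: f x.
Proof. by case=> _ _ H; apply: H. Qed.

Lemma inS_intro f : (forall x y, f (x + y) = f x + f y) ->
  (forall (r : R) (x : M), f ((r : R^c) *: x) = (r : R^c) *: f x) -> inS M f.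
Proof. by move=> H1 H2; split=> // x y _ _; [apply: H1 | apply: H2]. Qed.

Lemma inS_0 f : inS M f -> f 0 = 0.
Proof.
by move=> Hf; apply: (addrI (f 0)); rewrite -inS_add // !addr0.
Qed.

Lemma inS_N f x : inS M f -> f (- x) = - f x.
Proof.
move=> Hf; apply/eqP; rewrite -addr_eq0 -inS_add // addrC subrr inS_0 //.
Qed.

Lemma inS_B f x y : inS M f -> f (x - y) = f x - f y.
Proof. by move=> Hf; rewrite inS_add // inS_N. Qed.

Lemma inS_id : inS M id.
Proof. by apply: inS_intro. Qed.

Lemma inS_comp f g : inS M f -> inS M g -> inS M (f \o g).
Proof.
move=> Hf Hg; apply: inS_intro => [x y|r x] /=.
  by rewrite (inS_add _ _ Hg) (inS_add _ _ Hf).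
by rewrite (inS_scale _ _ Hg) (inS_scale _ _ Hf).
Qed.

Lemma inS_plus f g : inS M f -> inS M g -> inS M (fun x => f x + g x).
Proof.
move=> Hf Hg; apply: inS_intro => [x y|r x].
  by rewrite (inS_add _ _ Hf) (inS_add _ _ Hg) addrACA.
by rewrite (inS_scale _ _ Hf) (inS_scale _ _ Hg) scalerDr.
Qed.

Lemma inS_minus f g : inS M f -> inS M g -> inS M (fun x => f x - g x).
Proof.
move=> Hf Hg; apply: inS_intro => [x y|r x].
  by rewrite (inS_add _ _ Hf) (inS_add _ _ Hg) opprD addrACA.
by rewrite (inS_scale _ _ Hf) (inS_scale _ _ Hg) scalerBr.
Qed.

Lemma inS_opp f : inS M f -> inS M (fun x => - f x).
Proof.
move=> Hf; apply: inS_intro => [x y|r x].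
  by rewrite (inS_add _ _ Hf) opprD.
by rewrite (inS_scale _ _ Hf) scalerN.
Qed.

Lemma inS_zero : inS M (fun _ => 0).
Proof. by apply: inS_intro => [x y|r x]; rewrite ?addr0 ?scaler0. Qed.

Lemma decomp (P Q : M -> Prop) :
  is_submod (D:=modM M) P -> is_submod (D:=modM M) Q ->
  (forall x, P x -> Q x -> x = 0) ->
  (forall x, exists y z, [/\ P y, Q z & x = y + z]) ->
  exists p, [/\ inS M p, forall x, P (p x), forall x, Q (x - p x),
     forall x, P x -> p x = x & forall x, Q x -> p x = 0].
Proof.
move=> [_ P0 PD PN PZ] [_ Q0 QD QN QZ] PQ dec.
have H : forall x, exists y, P y /\ Q (x - y).
  by move=> x; have [y [z [Py Qz ->]]] := dec x; exists y; rewrite addrC addKr.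
have [p Hp] := choice _ H.
have uniq : forall x y, P y -> Q (x - y) -> p x = y.
  move=> x y Py Qy; have [Ppx Qpx] := Hp x.
  apply/eqP; rewrite -subr_eq0; apply/eqP; apply: PQ.
    by apply: PD => //; apply: PN.
  have -> : p x - y = (x - y) + - (x - p x).
    by rewrite opprB [RHS]addrC addrA subrK.
  by apply: QD => //; apply: QN.
exists p; split.
- apply: inS_intro => [x y|r x].
    apply: uniq; first by apply: PD; [case: (Hp x) | case: (Hp y)].
    have -> : x + y - (p x + p y) = (x - p x) + (y - p y).
      by rewrite opprD addrACA.
    by apply: QD; [case: (Hp x) | case: (Hp y)].
  apply: uniq; first by apply: PZ => //; case: (Hp x).
  by rewrite -scalerBr; apply: QZ => //; case: (Hp x).
- by move=> x; case: (Hp x).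
- by move=> x; case: (Hp x).
- by move=> x Px; apply: uniq; rewrite // subrr.
- by move=> x Qx; apply: uniq; rewrite // subr0.
Qed.

Lemma Ker_submod f : inS M f -> is_submod (D:=modM M) (Ker (D:=modM M) f).
Proof.
move=> Hf; split=> //=.
- by split=> //; rewrite inS_0.
- by move=> x y [_ Hx] [_ Hy]; split=> //; rewrite inS_add // Hx Hy addr0.
- by move=> x [_ Hx]; split=> //; rewrite inS_N // Hx oppr0.
- by move=> x r [_ Hx] _; split=> //; rewrite inS_scale // Hx scaler0.
Qed.

Lemma Im_submod f : inS M f -> is_submod (D:=modM M) (Im (D:=modM M) f).
Proof.
move=> Hf; split=> //=.
- by exists 0; split=> //; rewrite inS_0.
- by move=> x y [a [_ <-]] [b [_ <-]]; exists (a + b); rewrite inS_add.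
- by move=> x [a [_ <-]]; exists (- a); rewrite inS_N.
- by move=> x r [a [_ <-]] _; exists ((r : R^c) *: a); rewrite inS_scale.
Qed.


Lemma endoR_mul s : inS M s -> is_endo (D:=modS_right M) (fun t => s \o t).
Proof.
move=> Hs; split=> /=.
- by move=> x Hx; apply: inS_comp.
- move=> x y Hx Hy; apply: functional_extensionality => z /=.
  by rewrite /addS (inS_add _ _ Hs).
- by [].
Qed.

Lemma endoL_mul u : inS M u -> is_endo (D:=modS_left M) (fun t => t \o u).
Proof.
move=> Hu; split=> /=.
- by move=> x Hx; apply: inS_comp.
- by [].
- by [].
Qed.

Lemma ssR_right_elim s : strongly_self_Rickart (modS_right M) -> inS M s ->
  exists e, [/\ inS M e, forall x, s (e x) = 0,
     forall t, inS M t -> (forall x, s (t x) = 0) -> forall x, e (t x) = t x &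
     forall t u, inS M t -> inS M u -> (forall x, s (t x) = 0) ->
       forall x, s (u (t x)) = 0].
Proof.
move=> H Hs; have [[Q [[QS Q0 QD QN QZ] PQ dec]] FI] := H _ (endoR_mul Hs).
have [y [z [[Hy Ey] Qz Eid]]] := dec id inS_id.
have sy : forall x, s (y x) = 0 := fun x => congr1 (fun F => F x) Ey.
exists y; split=> //.
- move=> t Ht Hst x.
  have Qzt : Q (z \o t) := QZ z t Qz Ht.
  have Eidt : forall w, w = y w + z w := fun w => congr1 (fun F => F w) Eid.
  have Ez : z \o t = (fun _ => 0).
    apply: PQ Qzt; split; first exact: inS_comp (QS _ Qz) Ht.
    apply: functional_extensionality => w /=.
    have -> : z (t w) = t w - y (t w) by rewrite {2}(Eidt (t w)) addrC addKr.
    by rewrite (inS_B _ _ Hs) Hst sy subrr.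
  have := congr1 (fun F => F x) Ez => /= zt.
  by rewrite {2}(Eidt (t x)) zt addr0.
- move=> t u Ht Hu Hst x.
  have [_ E] := FI _ (endoR_mul Hu) t (conj Ht (functional_extensionality (s \o t) (fun _ => 0) Hst)).
  exact: (congr1 (fun F => F x) E).
Qed.

Lemma ssR_right_intro : (forall s, inS M s -> exists e, [/\ inS M e, forall x, s (e x) = 0,
     forall t, inS M t -> (forall x, s (t x) = 0) -> forall x, e (t x) = t x &
     forall t u, inS M t -> inS M u -> (forall x, s (t x) = 0) ->
       forall x, s (u (t x)) = 0]) ->
  strongly_self_Rickart (modS_right M).
Proof.
move=> H G [GS GD GZ].
have Hc : inS M (G id) := GS _ inS_id.
have GE : forall t, inS M t -> G t = G id \o t.
  by move=> t Ht; exact: (GZ id t inS_id Ht).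
have [e [He se efix FI]] := H _ Hc.
have ee : forall x, e (e x) = e x := efix e He se.
split.
- exists (fun t => inS M t /\ e \o t = (fun _ => 0)); split.
  + split.
    * by move=> t [].
    * split; first exact: inS_zero.
      by apply: functional_extensionality => x /=; rewrite (inS_0 He).
    * move=> t1 t2 [H1 E1] [H2 E2]; split; first exact: inS_plus.
      apply: functional_extensionality => x /=; rewrite /addS (inS_add _ _ He).
      have := congr1 (fun F => F x) E1; have := congr1 (fun F => F x) E2.
      by move=> /= -> ->; rewrite addr0.
    * move=> t [Ht Et]; split; first exact: inS_opp.
      apply: functional_extensionality => x /=; rewrite /oppS (inS_N _ He).
      have := congr1 (fun F => F x) Et.
      by move=> /= ->; rewrite oppr0.
    * move=> t r [Ht Et] Hr; split; first exact: inS_comp.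
      apply: functional_extensionality => x /=.
      by have := congr1 (fun F => F (r x)) Et.
  + move=> t [Ht Gt] [_ Et]; rewrite GE // in Gt.
    apply: functional_extensionality => x.
    rewrite -(efix t Ht (fun x => congr1 (fun F => F x) Gt) x).
    exact: (congr1 (fun F => F x) Et).
  + move=> t Ht; exists (e \o t), (fun x => t x - e (t x)); split.
    * split; first exact: inS_comp.
      rewrite GE; last exact: inS_comp.
      by apply: functional_extensionality => x /=; rewrite se.
    * split; first exact: (inS_minus (f:=t) (g:=e \o t) Ht (inS_comp He Ht)).
      apply: functional_extensionality => x /=.
      by rewrite (inS_B _ _ He) ee subrr.
    * apply: functional_extensionality => x /=.
      by rewrite /addS addrC subrK.
- move=> h Hh t [Ht Gt]; have [hS hD hZ] := Hh.
  have hE : h t = h id \o t by exact: (hZ id t inS_id Ht).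
  have Hhid : inS M (h id) := hS _ inS_id.
  split; first exact: hS.
  rewrite hE GE; last exact: inS_comp.
  rewrite GE // in Gt.
  apply: functional_extensionality => x /=.
  exact: (FI t (h id) Ht Hhid (fun y => congr1 (fun F => F y) Gt) x).
Qed.

Lemma ssR_left_elim c : strongly_self_Rickart (modS_left M) -> inS M c ->
  exists e, [/\ inS M e, forall x, e (c x) = 0,
     forall t, inS M t -> (forall x, t (c x) = 0) -> forall x, t (e x) = t x &
     forall t u, inS M t -> inS M u -> (forall x, t (c x) = 0) ->
       forall x, t (u (c x)) = 0].
Proof.
move=> H Hc; have [[Q [[QS Q0 QD QN QZ] PQ dec]] FI] := H _ (endoL_mul Hc).
have [y [z [[Hy Ey] Qz Eid]]] := dec id inS_id.
have yc : forall x, y (c x) = 0 := fun x => congr1 (fun F => F x) Ey.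
have Eidt : forall w, w = y w + z w := fun w => congr1 (fun F => F w) Eid.
exists y; split=> //.
- move=> t Ht Htc x.
  have Qtz : Q (t \o z) := QZ z t Qz Ht.
  have Ez : t \o z = (fun _ => 0).
    apply: PQ Qtz; split; first exact: inS_comp Ht (QS _ Qz).
    apply: functional_extensionality => w /=.
    have E := Eidt (c w); rewrite yc add0r in E.
    by rewrite -E Htc.
  have := congr1 (fun F => F x) Ez => /= tz.
  by rewrite [in RHS](Eidt x) (inS_add _ _ Ht) tz addr0.
- move=> t u Ht Hu Htc x.
  have [_ E] := FI _ (endoL_mul Hu) t (conj Ht (functional_extensionality (t \o c) (fun _ => 0) Htc)).
  exact: (congr1 (fun F => F x) E).
Qed.

Lemma ssR_left_intro : (forall c, inS M c -> exists e, [/\ inS M e, forall x, e (c x) = 0,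
     forall t, inS M t -> (forall x, t (c x) = 0) -> forall x, t (e x) = t x &
     forall t u, inS M t -> inS M u -> (forall x, t (c x) = 0) ->
       forall x, t (u (c x)) = 0]) ->
  strongly_self_Rickart (modS_left M).
Proof.
move=> H G [GS GD GZ].
have Hc : inS M (G id) := GS _ inS_id.
have GE : forall t, inS M t -> G t = t \o G id.
  by move=> t Ht; exact: (GZ id t inS_id Ht).
have [e [He ec efix FI]] := H _ Hc.
have ee : forall x, e (e x) = e x := efix e He ec.
split.
- exists (fun t => inS M t /\ t \o e = (fun _ => 0)); split.
  + split.
    * by move=> t [].
    * by split; first exact: inS_zero.
    * move=> t1 t2 [H1 E1] [H2 E2]; split; first exact: inS_plus.
      apply: functional_extensionality => x /=; rewrite /addS.
      have := congr1 (fun F => F x) E1; have := congr1 (fun F => F x) E2.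
      by move=> /= -> ->; rewrite addr0.
    * move=> t [Ht Et]; split; first exact: inS_opp.
      apply: functional_extensionality => x /=; rewrite /oppS.
      have := congr1 (fun F => F x) Et.
      by move=> /= ->; rewrite oppr0.
    * move=> t r [Ht Et] Hr; split; first exact: inS_comp.
      apply: functional_extensionality => x /=.
      have := congr1 (fun F => F x) Et => /= ->; exact: inS_0.
  + move=> t [Ht Gt] [_ Et]; rewrite GE // in Gt.
    apply: functional_extensionality => x.
    rewrite -(efix t Ht (fun x => congr1 (fun F => F x) Gt) x).
    exact: (congr1 (fun F => F x) Et).
  + move=> t Ht; exists (t \o e), (fun x => t x - t (e x)); split.
    * split; first exact: inS_comp.
      rewrite GE; last exact: inS_comp.
      by apply: functional_extensionality => x /=; rewrite ec (inS_0 Ht).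
    * split; first exact: (inS_minus (f:=t) (g:=t \o e) Ht (inS_comp Ht He)).
      apply: functional_extensionality => x /=.
      by rewrite ee subrr.
    * apply: functional_extensionality => x /=.
      by rewrite /addS addrC subrK.
- move=> h Hh t [Ht Gt]; have [hS hD hZ] := Hh.
  have hE : h t = t \o h id by exact: (hZ id t inS_id Ht).
  have Hhid : inS M (h id) := hS _ inS_id.
  split; first exact: hS.
  rewrite hE GE; last exact: inS_comp.
  rewrite GE // in Gt.
  apply: functional_extensionality => x /=.
  exact: (FI t (h id) Ht Hhid (fun y => congr1 (fun F => F y) Gt) x).
Qed.


Lemma M_ssR_elim f : strongly_self_Rickart (modM M) -> inS M f ->
  exists e, [/\ inS M e, forall x, f (e x) = 0, forall x, f x = 0 -> e x = x &
     forall h x, inS M h -> f x = 0 -> f (h x) = 0].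
Proof.
move=> H Hf; have [[Q [QS PQ dec]] FI] := H f Hf.
have [p [Hp Pp _ Pfix _]] := decomp (Ker_submod Hf) QS PQ (fun x => dec x I).
exists p; split=> //.
- by move=> x; case: (Pp x).
- by move=> x fx; apply: Pfix.
- by move=> h x Hh fx; have [] := FI h Hh x (conj I fx).
Qed.

Lemma M_ssR_intro : (forall f, inS M f -> exists e, [/\ inS M e, forall x, f (e x) = 0,
     forall x, f x = 0 -> e x = x &
     forall h x, inS M h -> f x = 0 -> f (h x) = 0]) -> strongly_self_Rickart (modM M).
Proof.
move=> H f Hf; have [e [He fe efix FI]] := H f Hf; split.
- exists (fun x => e x = 0); split.
  + split=> //=.
    * exact: inS_0.
    * by move=> x y ex ey; rewrite (inS_add _ _ He) ex ey addr0.
    * by move=> x ex; rewrite (inS_N _ He) ex oppr0.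
    * by move=> x r ex _; rewrite (inS_scale _ _ He) ex scaler0.
  + by move=> x [_ fx] ex; rewrite -(efix x fx).
  + move=> x _; exists (e x), (x - e x); split.
    * exact: (conj I (fe x)).
    * by rewrite /= (inS_B _ _ He) (efix _ (fe x)) subrr.
    * by rewrite /= addrC subrK.
- by move=> h Hh x [_ fx]; split=> //; apply: FI.
Qed.

Lemma M_dssR_elim f : dual_strongly_self_Rickart (modM M) -> inS M f ->
  exists q, [/\ inS M q, forall y, q (f y) = 0, forall x, q x = 0 -> exists y, x = f y,
     forall x, q (q x) = q x &
     forall h y, inS M h -> exists y', h (f y) = f y'].
Proof.
move=> H Hf; have [[Q [QS PQ dec]] FI] := H f Hf.
have [p [Hp Pp Qp Pfix Qz]] := decomp (Im_submod Hf) QS PQ (fun x => dec x I).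
exists (fun x => x - p x); split.
- exact: (inS_minus (f:=id) inS_id Hp).
- by move=> y; rewrite Pfix ?subrr //; exists y.
- move=> x /eqP; rewrite subr_eq0 => /eqP ->; have [y [_ <-]] := Pp x; by exists y.
- by move=> x; rewrite (Qz _ (Qp x)) subr0.
- move=> h y Hh; have [y' [_ <-]] := FI h Hh (f y) (ex_intro _ y (conj I erefl)).
  by exists y'.
Qed.

Lemma M_dssR_intro : (forall f, inS M f -> exists q, [/\ inS M q, forall y, q (f y) = 0,
     forall x, q x = 0 -> exists y, x = f y,
     forall x, q (q x) = q x & forall h y, inS M h -> exists y', h (f y) = f y']) ->
  dual_strongly_self_Rickart (modM M).
Proof.
move=> H f Hf; have [q [Hq qf qim qq FI]] := H f Hf; split.
- exists (fun x => q x = x); split.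
  + split=> //=.
    * exact: inS_0.
    * by move=> x y ex ey; rewrite (inS_add _ _ Hq) ex ey.
    * by move=> x ex; rewrite (inS_N _ Hq) ex.
    * by move=> x r ex _; rewrite (inS_scale _ _ Hq) ex.
  + by move=> x [y [_ <-]] qx; rewrite -qx qf.
  + move=> x _; exists (x - q x), (q x); split.
    * have [y Ey] : exists y, x - q x = f y.
        by apply: qim; rewrite (inS_B _ _ Hq) qq subrr.
      by exists y.
    * exact: qq.
    * by rewrite /= subrK.
- move=> h Hh x [y [_ <-]]; have [y' E] := FI h y Hh; by exists y'; rewrite E.
Qed.


Lemma q_fix f q : inS M q -> (forall x, q x = 0 -> exists y, x = f y) ->
  (forall x, q (q x) = q x) ->
  forall t, inS M t -> (forall y, t (f y) = 0) -> forall x, t (q x) = t x.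
Proof.
move=> Hq qim qq t Ht tf x.
have [y Ey] : exists y, x - q x = f y.
  by apply: qim; rewrite (inS_B _ _ Hq) qq subrr.
have : t (x - q x) = 0 by rewrite Ey tf.
by rewrite (inS_B _ _ Ht) => /eqP; rewrite subr_eq0 => /eqP ->.
Qed.

Definition trace_cond := forall f, inS M f -> forall x, f x = 0 ->
  exists t, [/\ inS M t, forall y, f (t y) = 0 & exists m, t m = x].

Definition cotrace_cond := forall f, inS M f -> forall m,
  (forall h, inS M h -> (forall y, h (f y) = 0) -> h m = 0) -> exists y, m = f y.

Lemma A1 : strongly_self_Rickart (modS_right M) -> trace_cond ->
  strongly_self_Rickart (modM M).
Proof.
move=> HS Htr; apply: M_ssR_intro => f Hf.
have [e [He fe efix FI]] := ssR_right_elim HS Hf.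
exists e; split=> //.
- by move=> x fx; have [t [Ht ft [m <-]]] := Htr f Hf x fx; exact: efix.
- by move=> h x Hh fx; have [t [Ht ft [m <-]]] := Htr f Hf x fx; exact: (FI t h Ht Hh ft m).
Qed.

Lemma B1 : strongly_self_Rickart (modM M) -> strongly_self_Rickart (modS_right M).
Proof.
move=> H; apply: ssR_right_intro => s Hs.
have [e [He se efix FI]] := M_ssR_elim H Hs; exists e; split=> //.
- by move=> t Ht st x; exact: efix (st x).
- by move=> t u Ht Hu st x; exact: FI u (t x) Hu (st x).
Qed.

Lemma A2 : strongly_self_Rickart (modS_left M) -> cotrace_cond ->
  dual_strongly_self_Rickart (modM M).
Proof.
move=> HS Hco; apply: M_dssR_intro => f Hf.
have [e [He ef efix FI]] := ssR_left_elim HS Hf.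
exists e; split=> //.
- move=> x ex; apply: Hco => // h Hh hf.
  by rewrite -(efix h Hh hf x) ex (inS_0 Hh).
- by move=> x; exact: efix e He ef x.
- move=> h y Hh.
  have [y' E] := Hco f Hf (h (f y)) (fun h' Hh' h'f => FI h' h Hh' Hh h'f y).
  by exists y'.
Qed.

Lemma B2 : dual_strongly_self_Rickart (modM M) -> strongly_self_Rickart (modS_left M).
Proof.
move=> H; apply: ssR_left_intro => c Hc.
have [q [Hq qc qim qq FI]] := M_dssR_elim H Hc; exists q; split=> //.
- exact: q_fix.
- by move=> t u Ht Hu tc x; have [y' ->] := FI u x Hu; exact: tc.
Qed.

Lemma P1_i_ii : strongly_self_Rickart (modM M) ->
  strongly_self_Rickart (modS_right M) /\ (forall f, inS M f -> Ker_M_cyclic M f).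
Proof.
move=> H; split; first exact: B1.
move=> f Hf; have [e [He fe efix FI]] := M_ssR_elim H Hf.
exists e; split=> // y; split.
- by move=> fy; exists y; apply: efix.
- by move=> [x <-].
Qed.

Lemma P1_ii_i : strongly_self_Rickart (modS_right M) /\ (forall f, inS M f -> Ker_M_cyclic M f) ->
  strongly_self_Rickart (modM M).
Proof.
move=> [HS Hc]; apply: A1 => // f Hf x fx.
have [p [Hp Ep]] := Hc f Hf.
have [m pm] := proj1 (Ep x) fx.
exists p; split=> //; last by exists m.
by move=> y; apply/(Ep (p y)); exists y.
Qed.

Lemma P1_i_iii : strongly_self_Rickart (modM M) ->
  strongly_self_Rickart (modS_right M) /\ (forall f, inS M f -> Ker_in_Stat M f).
Proof.
move=> H; split; first exact: B1.
move=> f Hf T beta b1 b2 b3.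
have [e [He fe efix FI]] := M_ssR_elim H Hf.
have Ke : HomM_Ker f e by split.
exists (beta e); split.
- by move=> x y _ _; apply: b2.
- move=> g m [Hg fg]; rewrite -(b3 e g m Ke Hg).
  have -> : e \o g = g.
    by apply: functional_extensionality => x /=; apply: efix.
  by [].
- move=> psi _ Hpsi x fx.
  rewrite -{1}(efix x fx); exact: Hpsi e x Ke.
Qed.

Lemma P1_iii_i : strongly_self_Rickart (modS_right M) /\ (forall f, inS M f -> Ker_in_Stat M f) ->
  strongly_self_Rickart (modM M).
Proof.
move=> [HS Hst]; apply: A1 => // f Hf x fx.
have [e [He fe efix FI]] := ssR_right_elim HS Hf.
exists e; split=> //; exists x.
have [phi [_ _ Hu]] := Hst f Hf M (fun g m => g m) (fun _ _ _ _ _ => erefl)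
  (fun g m1 m2 Hg => inS_add m1 m2 (proj1 Hg)) (fun _ _ _ _ _ => erefl).
have E1 : x = phi x.
  by apply: (Hu id) => //.
have E2 : e x = phi x.
  apply: (Hu e) => //.
  - by move=> a b _ _; apply: inS_add.
  - by move=> g m [Hg fg]; apply: efix.
by rewrite E2 -E1.
Qed.

Lemma P1_i_iv : strongly_self_Rickart (modM M) ->
  strongly_self_Rickart (modS_right M) /\ (forall f, inS M f -> ker_locally_split M f).
Proof.
move=> H; split; first exact: B1.
move=> f Hf a fa; have [e [He fe efix FI]] := M_ssR_elim H Hf.
by exists e; split; [split | apply: efix].
Qed.

Lemma P1_iv_i : strongly_self_Rickart (modS_right M) /\ (forall f, inS M f -> ker_locally_split M f) ->
  strongly_self_Rickart (modM M).
Proof.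
move=> [HS Hl]; apply: A1 => // f Hf x fx.
have [h [[Hh fh] hx]] := Hl f Hf x fx.
by exists h; split=> //; exists x.
Qed.

Lemma P1_i_v : strongly_self_Rickart (modM M) ->
  strongly_self_Rickart (modS_right M) /\ k_quasi_retractable M.
Proof.
move=> H; split; first exact: B1.
move=> f Hf [x [fx x0]]; have [e [He fe efix FI]] := M_ssR_elim H Hf.
by exists e; split; [split | exists x; rewrite efix].
Qed.

Lemma P1_v_i : strongly_self_Rickart (modS_right M) /\ k_quasi_retractable M ->
  strongly_self_Rickart (modM M).
Proof.
move=> [HS Hk]; apply: A1 => // f Hf x fx.
have [e [He fe efix FIf]] := ssR_right_elim HS Hf.
exists e; split=> //; exists x.
apply: NNPP => nex.
have ee : forall y, e (e y) = e y := efix e He fe.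
pose k := fun y => y - e y.
have Hk' : inS M k := inS_minus (f:=id) inS_id He.
have [? [_ _ _ FIk]] := ssR_right_elim HS Hk'.
have [? [_ _ _ FIe]] := ssR_right_elim HS He.
have c1 : forall u y, inS M u -> u (e y) = e (u (e y)).
  move=> u y Hu.
  have := FIk e u He Hu (fun z => ltac:(by rewrite /k ee subrr)) y.
  by rewrite /k => /eqP; rewrite subr_eq0 => /eqP.
have c2 : forall u y, inS M u -> e (u y) = e (u (e y)).
  move=> u y Hu.
  have := FIe k u Hk' Hu (fun z => ltac:(by rewrite /k (inS_B _ _ He) ee subrr)) y.
  by rewrite /k (inS_B _ _ Hu) (inS_B _ _ He) => /eqP; rewrite subr_eq0 => /eqP.
have central : forall u y, inS M u -> e (u y) = u (e y).
  by move=> u y Hu; rewrite c2 // -c1.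
pose g := fun y => f y + e y.
have Hg : inS M g := inS_plus Hf He.
have gk : g (k x) = 0.
  by rewrite /g /k (inS_B _ _ Hf) (inS_B _ _ He) fx fe ee !subrr addr0.
have kx0 : k x <> 0.
  move=> /eqP; rewrite subr_eq0 => /eqP ex; apply: nex; by rewrite -ex.
have [h [[Hh gh] [y hy]]] := Hk g Hg (ex_intro _ (k x) (conj gk kx0)).
have ehz : forall z, e (h z) = 0.
  move=> z; have := congr1 e (gh z).
  by rewrite /g (inS_add _ _ He) (inS_0 He) ee central // fe add0r.
have fh : forall z, f (h z) = 0.
  by move=> z; have := gh z; rewrite /g ehz addr0.
by apply: hy; rewrite -(efix h Hh fh y) ehz.
Qed.

Lemma P2_i_ii : dual_strongly_self_Rickart (modM M) ->
  strongly_self_Rickart (modS_left M) /\ (forall f, inS M f -> Coker_M_cocyclic M f).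
Proof.
move=> H; split; first exact: B2.
move=> f Hf; have [q [Hq qf qim qq FI]] := M_dssR_elim H Hf.
by exists q; split.
Qed.

Lemma P2_ii_i : strongly_self_Rickart (modS_left M) /\ (forall f, inS M f -> Coker_M_cocyclic M f) ->
  dual_strongly_self_Rickart (modM M).
Proof.
move=> [HS Hc]; apply: A2 => // f Hf m Hm.
have [q [Hq qf qim]] := Hc f Hf.
by apply: qim; apply: Hm.
Qed.

Lemma P2_i_iii : dual_strongly_self_Rickart (modM M) ->
  strongly_self_Rickart (modS_left M) /\ (forall f, inS M f -> Coker_in_Refl M f).
Proof.
move=> H; split; first exact: B2.
move=> f Hf; have [q [Hq qf qim qq FI]] := M_dssR_elim H Hf.
split.
- by move=> m Hm; apply: qim; apply: Hm.
- move=> phi p1 p2; exists (phi q) => h [Hh hf].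
  have hq : h \o q = h.
    by apply: functional_extensionality => x /=; apply: (q_fix Hq qim qq).
  have -> : phi h = phi (h \o q) by rewrite hq.
  by apply: p2.
Qed.

Lemma P2_iii_i : strongly_self_Rickart (modS_left M) /\ (forall f, inS M f -> Coker_in_Refl M f) ->
  dual_strongly_self_Rickart (modM M).
Proof.
move=> [HS Hr]; apply: A2 => // f Hf m Hm.
apply: (proj1 (Hr f Hf)) => h [Hh hf]; exact: Hm.
Qed.

Lemma P2_i_iv : dual_strongly_self_Rickart (modM M) ->
  strongly_self_Rickart (modS_left M) /\ (forall f, inS M f -> coker_locally_split M f).
Proof.
move=> H; split; first exact: B2.
move=> f Hf m; have [q [Hq qf qim qq FI]] := M_dssR_elim H Hf.
exists q; split; first by split.
by apply: qim; rewrite (inS_B _ _ Hq) qq subrr.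
Qed.

Lemma P2_iv_i : strongly_self_Rickart (modS_left M) /\ (forall f, inS M f -> coker_locally_split M f) ->
  dual_strongly_self_Rickart (modM M).
Proof.
move=> [HS Hl]; apply: A2 => // f Hf m Hm.
have [h [[Hh hf] [y E]]] := Hl f Hf m.
rewrite (Hm h Hh hf) sub0r in E.
by exists (- y); rewrite (inS_N _ Hf) -E opprK.
Qed.

Lemma P2_i_v : dual_strongly_self_Rickart (modM M) ->
  strongly_self_Rickart (modS_left M) /\ c_quasi_coretractable M.
Proof.
move=> H; split; first exact: B2.
move=> f Hf [x Hx]; have [q [Hq qf qim qq FI]] := M_dssR_elim H Hf.
exists q; split; first by split.
exists x => qx0; have [y Ey] := qim x qx0; exact: (Hx y (esym Ey)).
Qed.

Lemma P2_v_i : strongly_self_Rickart (modS_left M) /\ c_quasi_coretractable M ->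
  dual_strongly_self_Rickart (modM M).
Proof.
move=> [HS Hc]; apply: A2 => // f Hf m Hm.
have [e [He ef efix FIf]] := ssR_left_elim HS Hf.
have ee : forall y, e (e y) = e y := efix e He ef.
have em : e m = 0 := Hm e He ef.
apply: NNPP => nex.
pose k := fun y => y - e y.
have Hk' : inS M k := inS_minus (f:=id) inS_id He.
have [? [_ _ _ FIk]] := ssR_left_elim HS Hk'.
have [? [_ _ _ FIe]] := ssR_left_elim HS He.
have c2 : forall u y, inS M u -> e (u y) = e (u (e y)).
  move=> u y Hu.
  have := FIk e u He Hu (fun z => ltac:(by rewrite /k (inS_B _ _ He) ee subrr)) y.
  by rewrite /k (inS_B _ _ Hu) (inS_B _ _ He) => /eqP; rewrite subr_eq0 => /eqP.
have c1 : forall u y, inS M u -> u (e y) = e (u (e y)).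
  move=> u y Hu.
  have := FIe k u Hk' Hu (fun z => ltac:(by rewrite /k ee subrr)) y.
  by rewrite /k => /eqP; rewrite subr_eq0 => /eqP.
have central : forall u y, inS M u -> e (u y) = u (e y).
  by move=> u y Hu; rewrite c2 // -c1.
pose g := fun y => f y + e y.
have Hg : inS M g := inS_plus Hf He.
have gm : forall y, g y <> m.
  move=> y E; have := congr1 e E.
  rewrite /g (inS_add _ _ He) ef ee add0r em => ey.
  by apply: nex; exists y; rewrite -E /g ey addr0.
have [h [[Hh hg] [x hx]]] := Hc g Hg (ex_intro _ m gm).
have he : forall z, h (e z) = 0.
  by move=> z; have := hg (e z); rewrite /g -(central f z Hf) ef ee add0r.
have hf : forall y, h (f y) = 0.
  move=> y; have := hg (k y).
  by rewrite /g /k (inS_B _ _ Hf) (inS_B _ _ He) -(central f y Hf) ef ee !subrr subr0 addr0.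
by apply: hx; rewrite -(efix h Hh hf x) he.
Qed.

End Proofs.

Theorem theorem4p12 (R : pzRingType) (M : lmodType R^c) :
  [<-> strongly_self_Rickart (modM M);
       strongly_self_Rickart (modS_right M) /\
         (forall f, inS M f -> Ker_M_cyclic M f);
       strongly_self_Rickart (modS_right M) /\
         (forall f, inS M f -> Ker_in_Stat M f);
       strongly_self_Rickart (modS_right M) /\
         (forall f, inS M f -> ker_locally_split M f);
       strongly_self_Rickart (modS_right M) /\ k_quasi_retractable M]
  /\
  [<-> dual_strongly_self_Rickart (modM M);
       strongly_self_Rickart (modS_left M) /\
         (forall f, inS M f -> Coker_M_cocyclic M f);
       strongly_self_Rickart (modS_left M) /\
         (forall f, inS M f -> Coker_in_Refl M f);
       strongly_self_Rickart (modS_left M) /\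
         (forall f, inS M f -> coker_locally_split M f);
       strongly_self_Rickart (modS_left M) /\ c_quasi_coretractable M].
Proof.
split; tfae.
- exact: P1_i_ii.
- by move=> /P1_ii_i /P1_i_iii.
- by move=> /P1_iii_i /P1_i_iv.
- by move=> /P1_iv_i /P1_i_v.
- exact: P1_v_i.
- exact: P2_i_ii.
- by move=> /P2_ii_i /P2_i_iii.
- by move=> /P2_iii_i /P2_i_iv.
- by move=> /P2_iv_i /P2_i_v.
- exact: P2_v_i.
Qed.
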